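(* Let $n\ge 1$, $i\in\{1,\ldots,n-1\}$, and let $C$ be an $s_i$-stable set of transpositions in $S_n$ (i.e. $s_i\in C$ and $s_iCs_i=C$). Let $H_C^{*s_i}=\{f\in H_C\mid f*s_i=f\}$. Then $H_C^{*s_i}$ and $(x_i-x_{i+1})H_C^{*s_i}$ are $\mathbb{C}[t_1,\ldots,t_n]$-submodules of $H$ stable under the dot action, and $$H_C=H_C^{*s_i}\oplus (x_i-x_{i+1})H_C^{*s_i}$$ is an internal direct sum decomposition of $\mathbb{C}[t_1,\ldots,t_n]$-submodules of $H$ equipped with the dot action.
   Context: Let $S_n$ be the symmetric group on $\{1,\ldots,n\}$ with $(vw)(j)=v(w(j))$, and $s_i=(i\leftrightarrow i+1)$. Let $H=\mathrm{Fun}(S_n,\mathbb{C}[t_1,\ldots,t_n])$ with pointwise operations; it is a $\mathbb{C}[t_1,\ldots,t_n]$-module via constant functions. The star action (right) is $(f*w)(v;t_1,\ldots,t_n)=f(vw^{-1};t_1,\ldots,t_n)$, and the dot action (left) is $(w\cdot f)(v;t_1,\ldots,t_n)=f(w^{-1}v;t_{w(1)},\ldots,t_{w(n)})$. Let $x_i\in H$ be the function $v\mapsto t_{v(i)}$. For a transposition $\tau=(i\leftrightarrow k)$, $f\in H$ satisfies condition $\tau$ if $f-f*\tau=(x_i-x_k)g$ for some $g\in H$; these form a subring $H_\tau$, and for a set $C$ of transpositions $H_C=\bigcap_{\tau\in C}H_\tau$ (with $H_\varnothing=H$). *)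

(* Defs.v *)
From HB Require Import structures.
From mathcomp Require Import all_boot all_order all_algebra all_fingroup.
From mathcomp Require Import mpoly.
From mathcomp Require Import complex.
From mathcomp Require Import reals.
Set Implicit Arguments. Unset Strict Implicit. Unset Printing Implicit Defensive.
Import GRing.Theory.
Local Open Scope ring_scope.

Section GKM.
(* complex numbers = R[i] for a (Dedekind-complete) real field R, e.g. the reals *)
Variable R : realType.
Variable n : nat.

Definition CC := complex R.
(* the polynomial ring C[t_1,...,t_n]; variable t_{j+1} is 'X_j (0-based) *)
Definition Pol := {mpoly CC[n]}.
(* H = Fun(S_n, C[t_1..t_n]) with pointwise operations *)
Definition Hfun := 'S_n -> Pol.

(* the paper's composition (v w)(j) = v (w j); mathcomp's (w * v)%g x = v (w x) *)
Definition pmulc (v w : 'S_n) : 'S_n := (w * v)%g.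

Definition star (f : Hfun) (w : 'S_n) : Hfun := fun v => f (pmulc v (w^-1)%g).

(* dot action (left): (w . f)(v; t) = f(w^{-1} v; t_{w(1)},...,t_{w(n)}) *)
Definition dot (w : 'S_n) (f : Hfun) : Hfun := fun v => msym w (f (pmulc (w^-1)%g v)).

Definition xx (i : 'I_n) : Hfun := fun v => 'X_(v i).

Definition cond_tau (tau : 'S_n) (f : Hfun) : Prop :=
  forall a b : 'I_n, a != b -> tau = tperm a b ->
    exists g : Hfun, forall v, f v - star f tau v = (xx a v - xx b v) * g v.

Definition is_transposition (tau : 'S_n) : Prop :=
  exists a b : 'I_n, a != b /\ tau = tperm a b.

Definition H_C (C : {set 'S_n}) (f : Hfun) : Prop :=
  forall tau, tau \in C -> cond_tau tau f.

Definition H_C_inv (C : {set 'S_n}) (s : 'S_n) (f : Hfun) : Prop :=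
  H_C C f /\ forall v, star f s v = f v.

Definition mul_diff (i k : 'I_n) (A : Hfun -> Prop) (f : Hfun) : Prop :=
  exists g, A g /\ forall v, f v = (xx i v - xx k v) * g v.

(* C[t_1..t_n]-submodule of H (module structure via constant functions) *)
Definition is_submodule (A : Hfun -> Prop) : Prop :=
  A (fun _ => 0) /\
  (forall f g, A f -> A g -> A (fun v => f v + g v)) /\
  (forall (p : Pol) f, A f -> A (fun v => p * f v)).

Definition dot_stable (A : Hfun -> Prop) : Prop :=
  forall w f, A f -> A (dot w f).

Definition internal_direct_sum (D A B : Hfun -> Prop) : Prop :=
  (forall f, D f <-> exists g h, A g /\ B h /\ forall v, f v = g v + h v) /\
  (forall f, A f -> B f -> forall v, f v = 0).

End GKM.

Arguments H_C R {n} C f.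
Arguments H_C_inv R {n} C s f.
Arguments cond_tau R {n} tau f.

(* Main.v *)
Require Import Defs.
From HB Require Import structures.
From mathcomp Require Import all_boot all_order all_algebra all_fingroup.
From mathcomp Require Import mpoly.
From mathcomp Require Import complex.
From mathcomp Require Import reals.
From mathcomp Require Import ring.
From Stdlib Require Import IndefiniteDescription.
Local Open Scope ring_scope.
Import GRing.Theory Num.Theory.
Section S.
Variable R : realType.
Variable n : nat.
Local Notation P := (Pol R n).

Definition inI (a b : 'I_n) (x : P) := exists q, x = ('X_a - 'X_b) * q.

Lemma inI0 a b : inI a b 0.
Proof. by exists 0; rewrite mulr0. Qed.
Lemma inID a b x y : inI a b x -> inI a b y -> inI a b (x + y).
Proof. by move=> [q1 ->] [q2 ->]; exists (q1 + q2); rewrite mulrDr. Qed.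
Lemma inIM a b x y : inI a b x -> inI a b (y * x).
Proof. by move=> [q1 ->]; exists (y * q1); ring. Qed.

Definition hsub (a b : 'I_n) (j : 'I_n) : P := if j == a then 'X_b else 'X_j.
Definition sub a b : P -> P := mmap (@mpolyC n (CC R)) (hsub a b).

Lemma subXU a b j : sub a b 'X_j = hsub a b j.
Proof. by rewrite /sub mmapX mmap1U. Qed.

Lemma subM a b x y : sub a b (x * y) = sub a b x * sub a b y.
Proof. by rewrite /sub rmorphM. Qed.
Lemma subB a b x y : sub a b (x - y) = sub a b x - sub a b y.
Proof. by rewrite /sub rmorphB. Qed.

Lemma sub_diff a b p : inI a b (p - sub a b p).
Proof.
elim/mpolyind: p => [|c m p _ _ IH]; first by rewrite /sub raddf0 subr0; exact: inI0.
have -> : c *: 'X_[m] + p - sub a b (c *: 'X_[m] + p) =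
   c%:MP * ('X_[m] - sub a b 'X_[m]) + (p - sub a b p).
  rewrite /sub raddfD /= mmapZ /= -mul_mpolyC -!/(sub a b _).
  move: (c%:MP) ('X_[m] : P) (sub a b 'X_[m]) (sub a b p) => x y z w; ring.
apply: inID => //; apply: inIM.
rewrite /sub mmapX /mmap1 [X in X - _]mpolyXE_id.
pose rel (x y : P) := inI a b (x - y).
apply: (big_ind2 rel); rewrite /rel.
- by rewrite subrr; exact: inI0.
- move=> x1 x2 y1 y2 h1 h2.
  have -> : x1 * y1 - x2 * y2 = y1 * (x1 - x2) + x2 * (y1 - y2) by ring.
  by apply: inID; apply: inIM.
- move=> j _; elim: (m j) => [|k IHk]; first by rewrite !expr0 subrr; exact: inI0.
  have -> : ('X_j : P) ^+ k.+1 - hsub a b j ^+ k.+1 =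
     'X_j * ('X_j ^+ k - hsub a b j ^+ k) + hsub a b j ^+ k * ('X_j - hsub a b j)
    by rewrite !exprS; move: ('X_j : P) (hsub a b j) => x y; ring.
  apply: inID; apply: inIM => //.
  rewrite /hsub; case: eqP => [->|_]; first by exists 1; rewrite mulr1.
  by rewrite subrr; exact: inI0.
Qed.

Lemma Xinj (a b : 'I_n) : ('X_a : P) = 'X_b -> a = b.
Proof.
move=> /(congr1 (mcoeff U_(a))); rewrite !mcoeffXU eqxx.
by case: eqP => // _ /eqP; rewrite oner_eq0.
Qed.

Lemma cancel_div (a b r t : 'I_n) (h : P) :
  hsub a b r - hsub a b t != 0 ->
  inI a b (('X_r - 'X_t) * h) -> inI a b h.
Proof.
move=> nz [q Hq].
have : sub a b (('X_r - 'X_t) * h) = 0.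
  by rewrite Hq subM subB !subXU /hsub eqxx; case: eqP => [->|]; rewrite subrr mul0r.
rewrite subM subB !subXU => /eqP; rewrite mulf_eq0 (negbTE nz) /= => /eqP hs.
by have := sub_diff a b h; rewrite hs subr0.
Qed.

Lemma hsub_nz (a b r t : 'I_n) : r != t -> a != b ->
  ~~ ((r == a) && (t == b)) -> ~~ ((r == b) && (t == a)) ->
  hsub a b r - hsub a b t != 0.
Proof.
move=> rt ab h1 h2; rewrite subr_eq0 /hsub; apply/eqP.
have [ra|ra] := eqVneq r a; have [ta|ta] := eqVneq t a.
- by rewrite ra ta eqxx in rt.
- move=> /Xinj tb.
  by rewrite ra tb !eqxx in h1.
- move=> /Xinj rb.
  by rewrite rb ta !eqxx in h2.
- move=> /Xinj e.
  by rewrite e eqxx in rt.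
Qed.

Lemma msymXU (w : 'S_n) (j : 'I_n) : msym w ('X_j : P) = 'X_(w j).
Proof. by rewrite /msym mmapX mmap1U. Qed.

Lemma pmulcE (v w : 'S_n) x : pmulc v w x = v (w x).
Proof. by rewrite /pmulc permM. Qed.


Local Notation F := (Hfun R n).

Lemma inIMr a b x y : inI a b x -> inI a b (x * y).
Proof. by move=> h; rewrite mulrC; apply: inIM. Qed.
Lemma inIN a b x : inI a b x -> inI a b (- x).
Proof. by move=> [q ->]; exists (- q); rewrite mulrN. Qed.
Lemma inIB a b x y : inI a b x -> inI a b y -> inI a b (x - y).
Proof. by move=> hx hy; apply: inID => //; apply: inIN. Qed.

Definition cond_pw (tau : 'S_n) (f : F) := forall a b : 'I_n, a != b -> tau = tperm a b ->
  forall v : 'S_n, inI (v a) (v b) (f v - f (pmulc v tau)).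

Lemma cond_pwP tau f : cond_tau R tau f <-> cond_pw tau f.
Proof.
split.
- move=> H a b ab e v; have [G HG] := H a b ab e.
  by exists (G v); have := HG v; rewrite /star e tpermV.
- move=> H a b ab e; have H' := H a b ab e; subst tau.
  exists (fun v => proj1_sig (constructive_indefinite_description _ (H' v))) => v.
  rewrite /star tpermV.
  exact: (proj2_sig (constructive_indefinite_description _ (H' v))).
Qed.

Lemma HCP C f : H_C R C f <-> forall tau, tau \in C -> cond_pw tau f.
Proof.
split=> H tau /H; by rewrite cond_pwP.
Qed.

Lemma step5 (v : 'S_n) a b j : inI (v a) (v b) ('X_(v j) - 'X_(pmulc v (tperm a b) j)).
Proof.
rewrite pmulcE; case: tpermP => [->|->|_ _].
- by exists 1; rewrite mulr1.
- by exists (-1); rewrite mulrN1 opprB.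
- by rewrite subrr; exact: inI0.
Qed.

Lemma mul_HC C (r t : 'I_n) (g : F) : H_C R C g ->
  H_C R C (fun v => (xx R r v - xx R t v) * g v).
Proof.
move=> /HCP Hg; apply/HCP => tau tC a b ab e v; rewrite /xx.
have Hgv := Hg tau tC a b ab e v.
set Q := pmulc v tau.
have -> : ('X_(v r) - 'X_(v t)) * g v - ('X_(Q r) - 'X_(Q t)) * g Q =
  ('X_(v r) - 'X_(v t)) * (g v - g Q) + (('X_(v r) - 'X_(Q r)) - ('X_(v t) - 'X_(Q t))) * g Q.
  by ring.
apply: inID; first by apply: inIM.
by apply: inIMr; rewrite /Q e; apply: inIB; apply: step5.
Qed.

Lemma HC0 C : H_C R C (fun _ : 'S_n => (0 : P)).
Proof. by apply/HCP => tau _ a b _ _ v; rewrite subrr; exact: inI0. Qed.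

Lemma HCD C (f g : F) : H_C R C f -> H_C R C g -> H_C R C (fun v => f v + g v).
Proof.
move=> /HCP Hf /HCP Hg; apply/HCP => tau tC a b ab e v.
have -> : f v + g v - (f (pmulc v tau) + g (pmulc v tau)) =
   (f v - f (pmulc v tau)) + (g v - g (pmulc v tau)) by ring.
by apply: inID; [apply: Hf | apply: Hg].
Qed.

Lemma HCM C (p : P) (f : F) : H_C R C f -> H_C R C (fun v => p * f v).
Proof.
move=> /HCP Hf; apply/HCP => tau tC a b ab e v.
rewrite -mulrBr; apply: inIM; exact: Hf.
Qed.

Lemma HC_dot C (w : 'S_n) (f : F) : H_C R C f -> H_C R C (dot w f).
Proof.
move=> /HCP Hf; apply/HCP => tau tC a b ab e v; rewrite /dot.
set u := pmulc w^-1 v.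
have -> : pmulc w^-1 (pmulc v tau) = pmulc u tau by rewrite /u /pmulc mulgA.
have [q Hq] := Hf tau tC a b ab e u.
exists (msym w q); rewrite -msymB Hq msymM msymB !msymXU /u !pmulcE !permKV.
done.
Qed.


Lemma HC_ext C (f g : F) : (forall v, f v = g v) -> H_C R C f -> H_C R C g.
Proof.
move=> efg /HCP Hf; apply/HCP => tau tC a b ab e v.
by rewrite -!efg; apply: Hf.
Qed.

Section Core.
Variables (i i1 : 'I_n) (ii1 : i != i1).
Local Notation s := (tperm i i1).

Lemma pmulc_ss v : pmulc (pmulc v s) s = v.
Proof. by apply/permP => x; rewrite !pmulcE tpermK. Qed.

Lemma dnz (v : 'S_n) : 'X_(v i) - 'X_(v i1) != 0 :> P.
Proof.
rewrite subr_eq0; apply/eqP => /Xinj /perm_inj /eqP; by rewrite (negbTE ii1).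
Qed.

Lemma G_inv (f G : F) :
  (forall v : 'S_n, f v - f (pmulc v s) = ('X_(v i) - 'X_(v i1)) * G v) ->
  forall v, G (pmulc v s) = G v.
Proof.
move=> E v; have E1 := E v; have E2 := E (pmulc v s).
rewrite pmulc_ss !pmulcE tpermL tpermR in E2.
have : ('X_(v i) - 'X_(v i1)) * (G v - G (pmulc v s)) = 0.
  have -> : ('X_(v i) - 'X_(v i1)) * (G v - G (pmulc v s)) =
    ('X_(v i) - 'X_(v i1)) * G v + ('X_(v i1) - 'X_(v i)) * G (pmulc v s) by ring.
  rewrite -E1 -E2; ring.
move/eqP; rewrite mulf_eq0 (negbTE (dnz v)) /= subr_eq0 => /eqP.
by move=> ->.
Qed.

Lemma G_HC (C : {set 'S_n}) (f G : F) :
  (forall c, c \in C -> pmulc (pmulc s c) s \in C) ->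
  H_C R C f ->
  (forall v : 'S_n, f v - f (pmulc v s) = ('X_(v i) - 'X_(v i1)) * G v) ->
  H_C R C G.
Proof.
move=> stab /HCP Hf E; apply/HCP => tau tC a b ab e v.
case: (tau =P s) => [taus|taus].
  by rewrite taus (G_inv _ _ E) subrr; exact: inI0.
set Q := pmulc v tau.
apply: (@cancel_div _ _ (v i) (v i1)).
  apply: hsub_nz; rewrite ?(inj_eq perm_inj) //.
  - by apply/andP => [[/eqP ia /eqP i1b]]; apply: taus; rewrite e -ia -i1b.
  - by apply/andP => [[/eqP ib /eqP i1a]]; apply: taus; rewrite e -ib -i1a tpermC.
have E1 := E v; have E2 := E Q.
have E3 := Hf tau tC a b ab e v.
have ht' : tperm (s a) (s b) = pmulc (pmulc s tau) s.
  by rewrite -tpermJ /conjg tpermV /pmulc e mulgA.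
have t'C : tperm (s a) (s b) \in C by rewrite ht'; apply: stab.
have sab : s a != s b by rewrite (inj_eq perm_inj).
have E4 := Hf _ t'C (s a) (s b) sab erefl (pmulc v s).
rewrite !pmulcE !tpermK in E4.
have eQ : pmulc (pmulc v s) (tperm (s a) (s b)) = pmulc Q s.
  by apply/permP => x; rewrite ht' !pmulcE tpermK.
rewrite eQ in E4.
have E5 : inI (v a) (v b) (('X_(v i) - 'X_(v i1)) - ('X_(Q i) - 'X_(Q i1))).
  have -> : ('X_(v i) - 'X_(v i1)) - ('X_(Q i) - 'X_(Q i1)) =
    ('X_(v i) - 'X_(Q i)) - ('X_(v i1) - 'X_(Q i1)) :> P by ring.
  by rewrite /Q e; apply: inIB; apply: step5.
have -> : ('X_(v i) - 'X_(v i1)) * (G v - G Q) =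
  (f v - f Q) - (f (pmulc v s) - f (pmulc Q s)) -
  ((('X_(v i) - 'X_(v i1)) - ('X_(Q i) - 'X_(Q i1))) * G Q).
  have -> : ('X_(v i) - 'X_(v i1)) * (G v - G Q) =
    ('X_(v i) - 'X_(v i1)) * G v - (('X_(v i) - 'X_(v i1)) - ('X_(Q i) - 'X_(Q i1))) * G Q
    - ('X_(Q i) - 'X_(Q i1)) * G Q by ring.
  rewrite -E1 -E2; ring.
by apply: inIB; [apply: inIB|apply: inIMr].
Qed.

End Core.

End S.

From mathcomp Require Import zify.

Theorem theorem1 (R : realType) (n : nat) (i : 'I_n) (Hi : (i.+1 < n)%N)
  (C : {set 'S_n}) :
  let i1 : 'I_n := Ordinal Hi in
  let s : 'S_n := tperm i i1 in
  (forall tau, tau \in C -> is_transposition tau) ->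
  s \in C ->
  [set pmulc (pmulc s c) s | c in C] = C ->
  is_submodule (H_C_inv R C s) /\ dot_stable (H_C_inv R C s) /\
  is_submodule (mul_diff i i1 (H_C_inv R C s)) /\
  dot_stable (mul_diff i i1 (H_C_inv R C s)) /\
  internal_direct_sum (H_C R C) (H_C_inv R C s) (mul_diff i i1 (H_C_inv R C s)).
Proof.
move=> i1 s _ sC Hst.
have ii1 : i != i1.
  apply/eqP => /(congr1 val) /= h; lia.
have stab : forall c, c \in C -> pmulc (pmulc s c) s \in C.
  by move=> c cC; rewrite -[in X in _ \in X]Hst; apply: imset_f.
have hA : is_submodule (H_C_inv R C s).
  split; [|split].
  - by split; [exact: HC0|].
  - move=> f g [hf sf] [hg sg]; split; first exact: HCD.
    by move=> v; rewrite /star in sf sg *; rewrite sf sg.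
  - move=> p f [hf sf]; split; first exact: HCM.
    by move=> v; rewrite /star in sf *; rewrite sf.
have hAd : dot_stable (H_C_inv R C s).
  move=> w f [hf sf]; split; first exact: HC_dot.
  move=> v; rewrite /star /dot in sf *.
  have -> : pmulc w^-1 (pmulc v s^-1) = pmulc (pmulc w^-1 v) s^-1 by rewrite /pmulc mulgA.
  by rewrite sf.
have [hA0 [hAD hAM]] := hA.
split; first exact: hA.
split; first exact: hAd.
split.
  split; [|split].
  - by exists (fun _ => 0); split => // v; rewrite mulr0.
  - move=> f g [g1 [a1 e1]] [g2 [a2 e2]]; exists (fun v => g1 v + g2 v); split.
      exact: hAD.
    by move=> v; rewrite e1 e2 mulrDr.
  - move=> p f [g [ag eg]]; exists (fun v => p * g v); split; first exact: hAM.
    by move=> v; rewrite eg mulrCA.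
split.
  move=> w f [g [ag eg]]; exists (dot w g); split; first exact: hAd.
  by move=> v; rewrite /dot eg /xx msymM msymB !msymXU !pmulcE !permKV.
split.
- move=> f; split.
  + move=> hf.
    have [G HG] := hf s sC i i1 ii1 erefl.
    have E : forall v : 'S_n, f v - f (pmulc v s) = ('X_(v i) - 'X_(v i1)) * G v.
      by move=> v; have := HG v; rewrite /star tpermV.
    have GHC := @G_HC R n i i1 ii1 C f G stab hf E.
    have Ginv := @G_inv R n i i1 ii1 f G E.
    have AG : H_C_inv R C s G.
      by split => // v; rewrite /star tpermV; apply: Ginv.
    pose c : Pol R n := (2^-1 : CC R)%:MP.
    have hc : c + c = 1.
      have h2 : (2^-1 + 2^-1 : CC R) = 1 by field.
      by rewrite /c -raddfD /= h2 rmorph1.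
    pose g2 := fun v => c * G v.
    have Ag2 : H_C_inv R C s g2 by apply: hAM.
    exists (fun v => f v - (xx R i v - xx R i1 v) * g2 v), (fun v => (xx R i v - xx R i1 v) * g2 v).
    split; [|split].
    * split.
        apply: (@HC_ext R n C (fun v => f v + (-1) * ((xx R i v - xx R i1 v) * g2 v))).
          by move=> v; rewrite mulN1r.
        apply: HCD => //; apply: HCM; apply: mul_HC; exact: Ag2.1.
      move=> v; rewrite /star tpermV /xx /g2 !pmulcE tpermL tpermR Ginv.
      have Ef : f (pmulc v s) = f v - ('X_(v i) - 'X_(v i1)) * G v by rewrite -E; ring.
      rewrite Ef.
      have hc2 : G v = (c + c) * G v by rewrite hc mul1r.
      rewrite {1}hc2; ring.
    * by exists g2.
    * by move=> v; rewrite subrK.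
  + move=> [g [h [[hg _] [[k [ak ek]] sum]]]].
    apply: (@HC_ext R n C (fun v => g v + h v)); first by move=> v; rewrite sum.
    apply: HCD => //; apply: (@HC_ext R n C (fun v => (xx R i v - xx R i1 v) * k v)).
      by move=> v; rewrite ek.
    exact: mul_HC ak.1.
- move=> f [hf sf] [g [[hg sg] eg]] v.
  rewrite /star tpermV in sf sg.
  have e1 := eg v; have e2 := eg (pmulc v s).
  rewrite sf /xx !pmulcE tpermL tpermR sg in e2.
  have : f v *+ 2 = 0.
    by rewrite mulr2n {2}e2 e1 /xx; ring.
  rewrite -mulr_natr => /eqP; rewrite mulf_eq0 => /orP [/eqP //|].
  rewrite -(rmorph_nat (@mpolyC n (CC R))) mpolyC_eq0 pnatr_eq0 //.
Qed.
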